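(* For $\omega>0$ and $S>0$ let $\sigma=e^{-\sqrt6 S}$, $A=\sqrt{1+\frac{\omega}{2S^2}}$, and $$\Xi(S,\omega)={}_2F_1(1,2A+2,2A+3,\sigma)=(2A+2)\sum_{n\ge0}\frac{\sigma^n}{n+2A+2}.$$ Then, as $S\to0^+$ with $\omega$ fixed, $$\Xi(S,\omega)=\xi_{-1}\bigl(2\sqrt{3\omega}\bigr)\frac{\sqrt6}{S}+\xi_0\bigl(2\sqrt{3\omega}\bigr)+O(S),$$ where $\xi_{-1}(r)=\frac16\,r\,e^rE_1(r)$, $\xi_0(r)=\frac12\bigl(4(1+r)e^rE_1(r)-3\bigr)$ and $E_1(r)=\int_r^\infty e^{-t}\frac{dt}{t}$. *)

(* Defs.v *)
From Stdlib Require Import Reals.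
Open Scope R_scope.

Definition improper_int_infty (f : R -> R) (a l : R) : Prop :=
  (forall M, a <= M -> exists _ : Riemann_integrable f a M, True) /\
  forall eps, eps > 0 -> exists M0, forall M, M >= M0 -> M >= a ->
    exists pr : Riemann_integrable f a M, Rabs (RiemannInt pr - l) < eps.

Definition is_E1 (E1 : R -> R) : Prop :=
  forall r, r > 0 -> improper_int_infty (fun t => exp (- t) / t) r (E1 r).

Definition sigma (S : R) : R := exp (- (sqrt 6 * S)).
Definition Aparam (S omega : R) : R := sqrt (1 + omega / (2 * S ^ 2)).

Definition Xi_term (S omega : R) (n : nat) : R :=
  (2 * Aparam S omega + 2) * (sigma S ^ n / (INR n + 2 * Aparam S omega + 2)).

Definition xi_m1 (E1 : R -> R) (r : R) : R := / 6 * r * exp r * E1 r.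
Definition xi_0 (E1 : R -> R) (r : R) : R := / 2 * (4 * (1 + r) * exp r * E1 r - 3).

(* Main.v *)
Require Import Defs.
From Stdlib Require Import Reals Lra Psatz.
From Coquelicot Require Import Coquelicot.
Open Scope R_scope.
Definition g (t : R) : R := exp (- t) / t.
Definition h (t : R) : R := - (exp (- t) * (/ t + / t ^ 2)).

Lemma tangent x y : 0 < x -> 0 < y -> g x + h x * (y - x) <= g y.
Proof.
  intros Hx Hy. unfold g, h.
  set (d := y - x).
  assert (HE : exp (- y) = exp (- x) * exp (- d)).
  { rewrite <- exp_plus. f_equal. unfold d. ring. }
  assert (He : 0 < exp (- x)) by apply exp_pos.
  assert (H1 : exp (- x) * (1 - d) <= exp (- y)).
  { rewrite HE. apply Rmult_le_compat_l; [lra|]. pose proof (exp_ineq1_le (- d)). lra. }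
  assert (Hn : exp (- x) * (x + 1) * d ^ 2 <=
     exp (- y) * x ^ 2 - exp (- x) * x ^ 2 - exp (- x) * x * d + exp (- x) * (x + 1) * d * y).
  { assert (y = x + d) by (unfold d; ring).
    assert (exp (-x) * (1 - d) * x^2 <= exp (-y) * x^2) by (apply Rmult_le_compat_r; nra).
    clearbody d. subst y. nra. }
  assert (Hpos : 0 <= exp (- x) * (x + 1) * d ^ 2).
  { apply Rmult_le_pos; [|nra]. nra. }
  assert (Heq : exp (- y) / y - (exp (- x) / x + - (exp (- x) * (/ x + / x ^ 2)) * d) =
    (exp (- y) * x ^ 2 - exp (- x) * x ^ 2 - exp (- x) * x * d + exp (- x) * (x + 1) * d * y) / (x ^ 2 * y)).
  { unfold d. field. lra. }
  assert (0 <= (exp (- y) * x ^ 2 - exp (- x) * x ^ 2 - exp (- x) * x * d + exp (- x) * (x + 1) * d * y) / (x ^ 2 * y)).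
  { unfold Rdiv; apply Rmult_le_pos; [lra | left; apply Rinv_0_lt_compat; apply Rmult_lt_0_compat; nra]. }
  lra.
Qed.

Lemma g_pos x : 0 < x -> 0 < g x.
Proof. intros. unfold g. apply Rdiv_lt_0_compat; auto. apply exp_pos. Qed.

Lemma g_dec x y : 0 < x <= y -> g y <= g x.
Proof.
  intros [Hx Hxy]. unfold g. unfold Rdiv.
  apply Rmult_le_compat; try (left; apply exp_pos); try (left; apply Rinv_0_lt_compat; lra).
  - apply exp_le_3 || (destruct (Req_dec x y); [subst; lra|]); left; apply exp_increasing; lra.
  - apply Rinv_le_contravar; lra.
Qed.

Lemma h_neg x : 0 < x -> h x < 0.
Proof.
  intros. unfold h. assert (0 < exp (-x)) by apply exp_pos.
  assert (0 < / x) by (apply Rinv_0_lt_compat; lra).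
  assert (0 < / x ^ 2) by (apply Rinv_0_lt_compat; nra). nra.
Qed.

Lemma g_le_inv x : 0 < x -> g x <= / x.
Proof.
  intros. unfold g. unfold Rdiv. rewrite <- (Rmult_1_l (/ x)) at 2.
  apply Rmult_le_compat_r. left; apply Rinv_0_lt_compat; lra.
  rewrite <- exp_0. destruct (Req_dec x 0); [lra|]. left; apply exp_increasing; lra.
Qed.
Lemma lin_int a b u e : is_RInt (fun y => a + b * (y - u)) u (u + e) (a * e + b * e ^ 2 / 2).
Proof.
  replace (a * e + b * e ^ 2 / 2) with
    (minus ((fun y => a * y + b * (y - u) ^ 2 / 2) (u + e)) ((fun y => a * y + b * (y - u) ^ 2 / 2) u)).
  2:{ unfold minus, plus, opp; simpl. field. }
  apply (is_RInt_derive (V:=R_CompleteNormedModule) (fun y => a * y + b * (y - u) ^ 2 / 2) (fun y => a + b * (y - u))).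
  - intros x _. auto_derive; auto. simpl. field.
  - intros x _. apply (ex_derive_continuous (fun y => a + b * (y - u))). auto_derive. auto.
Qed.

Lemma lin_RInt a b u e : RInt (fun y => a + b * (y - u)) u (u + e) = a * e + b * e ^ 2 / 2.
Proof. apply is_RInt_unique, lin_int. Qed.

Lemma piece u e : 0 < u -> 0 < e -> ex_RInt g u (u + e) ->
  0 <= e * (g u + g (u + e)) / 2 - RInt g u (u + e) <= e ^ 2 * (h (u + e) - h u) / 2.
Proof.
  intros Hu He Hex. split.
  - assert (RInt g u (u + e) <= RInt (fun y => g u + ((g (u + e) - g u) / e) * (y - u)) u (u + e)).
    { apply RInt_le; [lra|assumption|eexists; apply lin_int|].
      intros y Hy.
      pose proof (tangent y u ltac:(lra) Hu).
      pose proof (tangent y (u + e) ltac:(lra) ltac:(lra)).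
      set (l := (y - u) / e).
      assert (Hle : y - u = l * e) by (unfold l; field; lra).
      assert (0 <= l <= 1) by (clearbody l; split; nra).
      assert (Hl : (g (u + e) - g u) / e * (y - u) = l * (g (u + e) - g u)) by (unfold l; field; lra).
      rewrite Hl.
      clearbody l.
      assert ((1-l)*(g y + h y*(u-y)) <= (1-l)* g u) by (apply Rmult_le_compat_l; lra).
      assert (l*(g y + h y*(u+e-y)) <= l*g(u+e)) by (apply Rmult_le_compat_l; lra).
      assert (Hz : (1-l)*(u-y) + l*(u+e-y) = 0) by lra.
      assert (h y * ((1-l)*(u-y) + l*(u+e-y)) = 0) by (rewrite Hz; ring).
      lra. }
    rewrite lin_RInt in H.
    assert (e * (g u + g (u + e)) / 2 = g u * e + (g (u + e) - g u) / e * e ^ 2 / 2) by (field; lra).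
    lra.
  - assert (RInt (fun y => g u + h u * (y - u)) u (u + e) <= RInt g u (u + e)).
    { apply RInt_le; [lra|eexists; apply lin_int|assumption|].
      intros y Hy. apply tangent; lra. }
    rewrite lin_RInt in H.
    pose proof (tangent (u + e) u ltac:(lra) Hu).
    replace (u - (u + e)) with (- e) in H0 by ring.
    nra.
Qed.

Lemma trap_sum s e : 0 < s -> 0 < e -> (forall M, s <= M -> ex_RInt g s M) -> forall N,
  0 <= e * sum_f_R0 (fun n => g (s + INR n * e)) N - e * (g s + g (s + INR N * e)) / 2
       - RInt g s (s + INR N * e) <= e ^ 2 * (h (s + INR N * e) - h s) / 2.
Proof.
  intros Hs He Hex. induction N as [|N IH].
  - simpl. replace (s + 0 * e) with s by ring. rewrite RInt_point.
    unfold zero; simpl. lra.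
  - set (u := s + INR N * e) in *.
    assert (Hu : s + INR (S N) * e = u + e) by (rewrite S_INR; unfold u; ring).
    rewrite Hu, tech5. cbv beta. rewrite Hu. fold u.
    assert (HuS : s <= u). { unfold u. pose proof (pos_INR N). nra. }
    assert (Hc : RInt g s (u + e) = RInt g s u + RInt g u (u + e)).
    { rewrite <- (RInt_Chasles g s u (u + e)). reflexivity.
      apply (ex_RInt_Chasles_1 g s u (u + e)); [lra|apply Hex; lra].
      apply (ex_RInt_Chasles_2 g s u (u + e)); [lra|apply Hex; lra]. }
    rewrite Hc.
    pose proof (piece u e ltac:(lra) He (ex_RInt_Chasles_2 g s u (u + e) ltac:(lra) (Hex (u + e) ltac:(lra)))).
    lra.
Qed.

Lemma improper_RInt s E : improper_int_infty g s E ->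
  (forall M, s <= M -> ex_RInt g s M) /\
  (forall eps, 0 < eps -> exists M0, forall M, M >= M0 -> M >= s -> Rabs (RInt g s M - E) < eps).
Proof.
  intros [H1 H2]. split.
  - intros M HM. destruct (H1 M HM) as [pr _]. apply ex_RInt_Reals_1. exact pr.
  - intros eps Heps. destruct (H2 eps Heps) as [M0 HM0]. exists M0. intros M HM HMs.
    destruct (HM0 M HM HMs) as [pr Hpr]. rewrite (RInt_Reals g s M pr). exact Hpr.
Qed.

Lemma series_lim s e E P : 0 < s -> 0 < e -> improper_int_infty g s E ->
  infinite_sum (fun n => g (s + INR n * e)) P ->
  0 <= e * P - e * g s / 2 - E <= - e ^ 2 * h s / 2.
Proof.
  intros Hs He HI HP. destruct (improper_RInt s E HI) as [Hex Hlim].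
  assert (key : forall eta, 0 < eta -> exists N,
     Rabs (sum_f_R0 (fun n => g (s + INR n * e)) N - P) < eta /\
     Rabs (RInt g s (s + INR N * e) - E) < eta /\ g (s + INR N * e) < eta).
  { intros eta Heta.
    destruct (HP eta Heta) as [N1 HN1].
    destruct (Hlim eta Heta) as [M0 HM0].
    destruct (INR_unbounded (Rmax M0 (/ eta) / e)) as [N2 HN2].
    exists (N1 + N2)%nat.
    assert (HN : Rmax M0 (/ eta) < INR (N1 + N2) * e).
    { rewrite plus_INR. pose proof (pos_INR N1).
      apply Rmult_gt_compat_r with (r := e) in HN2; auto.
      unfold Rdiv in HN2. rewrite Rmult_assoc, Rinv_l in HN2; nra. }
    pose proof (Rmax_l M0 (/ eta)). pose proof (Rmax_r M0 (/ eta)).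
    assert (0 <= INR (N1 + N2) * e) by (apply Rmult_le_pos; [apply pos_INR|lra]).
    split; [|split].
    - apply HN1. lia.
    - apply HM0; lra.
    - eapply Rle_lt_trans. apply g_le_inv. lra.
      rewrite <- (Rinv_inv eta). apply Rinv_lt_contravar.
      apply Rmult_lt_0_compat; [apply Rinv_0_lt_compat|]; lra. lra. }
  pose proof (h_neg s Hs) as Hhs.
  split.
  - apply Rle_plus_epsilon. intros eps Heps.
    destruct (key (eps / (e + 1))) as [N [H1 [H2 H3]]].
    { apply Rdiv_lt_0_compat; lra. }
    pose proof (trap_sum s e Hs He Hex N) as [T1 T2].
    apply Rabs_def2 in H1. apply Rabs_def2 in H2.
    assert (e * (eps / (e + 1)) + eps / (e + 1) = eps) by (field; lra).
    assert (0 < g (s + INR N * e)).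
    { apply g_pos. pose proof (pos_INR N). nra. }
    nra.
  - apply Rle_plus_epsilon. intros eps Heps.
    destruct (key (eps / (2 * e + 1))) as [N [H1 [H2 H3]]].
    { apply Rdiv_lt_0_compat; lra. }
    pose proof (trap_sum s e Hs He Hex N) as [T1 T2].
    apply Rabs_def2 in H1. apply Rabs_def2 in H2.
    assert (2 * e * (eps / (2 * e + 1)) + eps / (2 * e + 1) = eps) by (field; lra).
    assert (h (s + INR N * e) < 0). { apply h_neg. pose proof (pos_INR N). nra. }
    nra.
Qed.


Lemma E1_diff r s Er Es : 0 < r -> r <= s -> improper_int_infty g r Er -> improper_int_infty g s Es ->
  Er - Es = RInt g r s.
Proof.
  intros Hr Hrs Ir Is. destruct (improper_RInt r Er Ir) as [Exr Lr].
  destruct (improper_RInt s Es Is) as [Exs Ls].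
  assert (key : forall eps, 0 < eps -> Rabs (Er - Es - RInt g r s) < 2 * eps).
  { intros eps Heps. destruct (Lr eps Heps) as [M1 H1]. destruct (Ls eps Heps) as [M2 H2].
    set (M := Rmax s (Rmax M1 M2)).
    assert (s <= M) by apply Rmax_l.
    assert (M1 <= M) by (unfold M; eapply Rle_trans; [apply Rmax_l|apply Rmax_r]).
    assert (M2 <= M) by (unfold M; eapply Rle_trans; [apply Rmax_r|apply Rmax_r]).
    specialize (H1 M ltac:(lra) ltac:(lra)). specialize (H2 M ltac:(lra) ltac:(lra)).
    assert (Hc : RInt g r M = RInt g r s + RInt g s M).
    { rewrite <- (RInt_Chasles g r s M). reflexivity.
      apply (ex_RInt_Chasles_1 g r s M); [lra|apply Exr; lra].
      apply (ex_RInt_Chasles_2 g r s M); [lra|apply Exr; lra]. }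
    apply Rabs_def2 in H1. apply Rabs_def2 in H2. apply Rabs_def1; lra. }
  destruct (Req_dec (Er - Es) (RInt g r s)) as [|Hne]; auto.
  exfalso. set (z := Rabs (Er - Es - RInt g r s)).
  assert (0 < z) by (apply Rabs_pos_lt; lra).
  specialize (key (z / 4) ltac:(lra)). fold z in key. lra.
Qed.

Lemma J_bounds r d : 0 < r -> 0 <= d -> ex_RInt g r (r + d) ->
  d * g r + h r * d ^ 2 / 2 <= RInt g r (r + d) <= d * g r.
Proof.
  intros Hr Hd Hex. split.
  - assert (RInt (fun y => g r + h r * (y - r)) r (r + d) <= RInt g r (r + d)).
    { apply RInt_le; [lra|eexists; apply lin_int|assumption|].
      intros y Hy. apply tangent; lra. }
    rewrite lin_RInt in H. lra.
  - assert (RInt g r (r + d) <= RInt (fun y => g r + 0 * (y - r)) r (r + d)).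
    { apply RInt_le; [lra|assumption|eexists; apply lin_int|].
      intros y Hy. replace (g r + 0 * (y - r)) with (g r) by ring. apply g_dec; lra. }
    rewrite lin_RInt in H. lra.
Qed.

Lemma final_alg r e d X Fr q m th1 th2 Lt :
  0 < r -> 0 < e -> e <= r / 2 -> e <= 1 / 6 -> 0 < X -> q = / (r * X) -> 0 < m ->
  0 <= d - 2 * e <= 2 * e ^ 2 / r -> 0 <= th1 <= m * d ^ 2 / 2 -> 0 <= th2 <= 2 * d ^ 2 ->
  Rabs Lt <= e * (1 + / r) / 2 ->
  Rabs ((r + d) / e * X * (1 + d + th2) * (Fr - d * q + th1) + / 2 + Lt
        - (r * X * Fr / e + 2 * (1 + r) * X * Fr - 3 / 2))
  <= ((1 + / r) / 2 + (2 / r) * Rabs ((1 + r) * X * Fr - 1) + 9 * Rabs (X * Fr - / r)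
      + 9 * (r + 1) * X * (3 * q + 3 * m + 2 * Rabs Fr)) * e.
Proof.
  intros Hr He Her He6 HX Hq Hm Hd Hth1 Hth2 HL.
  assert (Hq0 : 0 < q) by (rewrite Hq; apply Rinv_0_lt_compat; nra).
  assert (Hw : d - 2 * e <= e).
  { assert (2 * e ^ 2 / r <= e).
    { apply Rmult_le_reg_r with r; auto. unfold Rdiv. rewrite Rmult_assoc, Rinv_l; nra. }
    lra. }
  assert (Hd0 : 2 * e <= d) by lra. assert (Hd3 : d <= 3 * e) by lra.
  set (rho := - d ^ 2 * q + th1 * (1 + d) + th2 * (Fr - d * q + th1)).
  set (Y1 := (1 + r) * X * Fr - 1). set (Y2 := X * Fr - / r).
  assert (Hid : (r + d) / e * X * (1 + d + th2) * (Fr - d * q + th1) + / 2 + Lt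
        - (r * X * Fr / e + 2 * (1 + r) * X * Fr - 3 / 2) =
        Lt + ((d - 2 * e) / e) * Y1 + (d ^ 2 / e) * Y2 + ((r + d) / e * X) * rho).
  { unfold rho, Y1, Y2. rewrite Hq. field. lra. }
  rewrite Hid.
  assert (HR1 : Rabs (((d - 2 * e) / e) * Y1) <= (2 / r) * Rabs Y1 * e).
  { rewrite Rabs_mult. rewrite (Rabs_right ((d - 2 * e) / e)).
    2:{ apply Rle_ge. unfold Rdiv. apply Rmult_le_pos; [lra|left; apply Rinv_0_lt_compat; lra]. }
    assert ((d - 2 * e) / e <= 2 * e / r).
    { unfold Rdiv. apply Rmult_le_reg_r with e; auto. rewrite Rmult_assoc, Rinv_l by lra.
      apply Rmult_le_reg_r with r; auto. rewrite Rmult_1_r.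
      assert (2 * e ^ 2 / r * r = 2 * e ^ 2) by (field; lra). nra. }
    pose proof (Rabs_pos Y1).
    assert (2 * e / r = 2 / r * e) by (field; lra). nra. }
  assert (HR2 : Rabs ((d ^ 2 / e) * Y2) <= 9 * Rabs Y2 * e).
  { rewrite Rabs_mult. rewrite (Rabs_right (d ^ 2 / e)).
    2:{ apply Rle_ge. unfold Rdiv. apply Rmult_le_pos; [nra|left; apply Rinv_0_lt_compat; lra]. }
    assert (d ^ 2 / e <= 9 * e).
    { unfold Rdiv. apply Rmult_le_reg_r with e; auto. rewrite Rmult_assoc, Rinv_l by lra. nra. }
    pose proof (Rabs_pos Y2). nra. }
  assert (Hrho : Rabs rho <= d ^ 2 * (3 * q + 3 * m + 2 * Rabs Fr)).
  { unfold rho. pose proof (Rabs_pos Fr).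
    assert (Hd1 : d <= 1 / 2) by lra.
    assert (Hdq : d * q <= q) by (assert (0 <= (1 - d) * q) by (apply Rmult_le_pos; lra); lra).
    assert (Hd2 : d ^ 2 <= 1) by nra.
    assert (Hmd : m * d ^ 2 / 2 <= m) by (assert (m * d ^ 2 <= m * 1) by (apply Rmult_le_compat_l; lra); lra).
    assert (Rabs (th2 * (Fr - d * q + th1)) <= 2 * d ^ 2 * (Rabs Fr + q + m)).
    { rewrite Rabs_mult, (Rabs_right th2) by lra.
      assert (Rabs (Fr - d * q + th1) <= Rabs Fr + q + m).
      { eapply Rle_trans. apply Rabs_triang. eapply Rle_trans. apply Rplus_le_compat_r. apply Rabs_triang.
        rewrite Rabs_Ropp, (Rabs_right (d * q)) by nra. rewrite (Rabs_right th1) by lra. lra. }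
      pose proof (Rabs_pos (Fr - d * q + th1)). nra. }
    eapply Rle_trans. apply Rabs_triang. eapply Rle_trans. apply Rplus_le_compat_r. apply Rabs_triang.
    rewrite (Rabs_left1 (- d ^ 2 * q)) by nra. rewrite (Rabs_right (th1 * (1 + d))) by nra.
    nra. }
  assert (HR3 : Rabs ((r + d) / e * X * rho) <= 9 * (r + 1) * X * (3 * q + 3 * m + 2 * Rabs Fr) * e).
  { rewrite Rabs_mult. rewrite (Rabs_right ((r + d) / e * X)).
    2:{ apply Rle_ge. unfold Rdiv. apply Rmult_le_pos; [apply Rmult_le_pos|]; [nra|left; apply Rinv_0_lt_compat; lra|lra]. }
    set (K := 3 * q + 3 * m + 2 * Rabs Fr).
    assert (0 <= K) by (unfold K; pose proof (Rabs_pos Fr); nra).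
    assert ((r + d) / e * X * (d ^ 2 * K) <= 9 * (r + 1) * X * K * e).
    { assert ((r + d) / e * X * (d ^ 2 * K) = (r + d) * X * K * (d ^ 2 / e)) by (field; lra).
      rewrite H0.
      assert (d ^ 2 / e <= 9 * e).
      { unfold Rdiv. apply Rmult_le_reg_r with e; auto. rewrite Rmult_assoc, Rinv_l by lra. nra. }
      assert (0 <= (r + d) * X * K) by (apply Rmult_le_pos; [nra|auto]).
      assert (0 <= d ^ 2 / e) by (unfold Rdiv; apply Rmult_le_pos; [nra|left; apply Rinv_0_lt_compat; lra]).
      assert ((r + d) * X * K <= (r + 1) * X * K) by (apply Rmult_le_compat_r; auto; nra).
      nra. }
    eapply Rle_trans; [|exact H0]. apply Rmult_le_compat_l; [|exact Hrho].
    unfold Rdiv. apply Rmult_le_pos; [apply Rmult_le_pos|]; [nra|left; apply Rinv_0_lt_compat; lra|lra]. }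
  eapply Rle_trans. apply Rabs_triang. eapply Rle_trans. apply Rplus_le_compat_r. apply Rabs_triang.
  eapply Rle_trans. apply Rplus_le_compat_r. apply Rplus_le_compat_r. apply Rabs_triang.
  lra.
Qed.

Lemma exp_pow_nat x n : exp x ^ n = exp (INR n * x).
Proof.
  induction n as [|n IH].
  - simpl. rewrite Rmult_0_l, exp_0. reflexivity.
  - rewrite S_INR. simpl. rewrite IH, <- exp_plus. f_equal. ring.
Qed.

Lemma infinite_sum_scal f f' c X : 0 < c -> (forall n, f n = c * f' n) ->
  infinite_sum f X -> infinite_sum f' (X / c).
Proof.
  intros Hc Hf HX eps Heps.
  destruct (HX (eps * c) ltac:(nra)) as [N HN]. exists N. intros n Hn.
  specialize (HN n Hn). unfold R_dist in *.
  assert (Hs : sum_f_R0 f n = c * sum_f_R0 f' n).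
  { rewrite scal_sum. apply sum_eq. intros i _. rewrite Hf. ring. }
  rewrite Hs in HN.
  replace (c * sum_f_R0 f' n - X) with (c * (sum_f_R0 f' n - X / c)) in HN by (field; lra).
  rewrite Rabs_mult, (Rabs_right c) in HN by lra.
  apply Rmult_lt_reg_l with c; auto. lra.
Qed.

Theorem mainTheorem15 :
  forall (omega : R) (E1 : R -> R) (Xi : R -> R),
    omega > 0 ->
    is_E1 E1 ->
    (forall S, S > 0 -> infinite_sum (Xi_term S omega) (Xi S)) ->
    exists C delta, C > 0 /\ delta > 0 /\
      forall S, 0 < S < delta ->
        Rabs (Xi S
              - (xi_m1 E1 (2 * sqrt (3 * omega)) * (sqrt 6 / S)
                 + xi_0 E1 (2 * sqrt (3 * omega))))
        <= C * S.
Proof.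
  intros omega E1 Xi Hom HE1 HXi.
  assert (H3o : 0 < sqrt (3 * omega)) by (apply sqrt_lt_R0; lra).
  assert (H3o2 : sqrt (3 * omega) * sqrt (3 * omega) = 3 * omega) by (apply sqrt_sqrt; lra).
  set (r := 2 * sqrt (3 * omega)).
  assert (Hr : 0 < r) by (unfold r; lra).
  set (X := exp r). set (Fr := E1 r). set (q := g r). set (m := - h r).
  assert (HX : 0 < X) by apply exp_pos.
  assert (Hq : q = / (r * X)).
  { unfold q, g, X. rewrite exp_Ropp. field. split; [apply Rgt_not_eq, exp_pos|lra]. }
  assert (Hm : 0 < m) by (unfold m; pose proof (h_neg r Hr); lra).
  assert (Hq0 : 0 < q) by (apply g_pos; auto).
  set (Ce := (1 + / r) / 2 + (2 / r) * Rabs ((1 + r) * X * Fr - 1) + 9 * Rabs (X * Fr - / r)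
      + 9 * (r + 1) * X * (3 * q + 3 * m + 2 * Rabs Fr)).
  assert (HCe : 0 < Ce).
  { unfold Ce. pose proof (Rabs_pos ((1 + r) * X * Fr - 1)). pose proof (Rabs_pos (X * Fr - / r)).
    pose proof (Rabs_pos Fr). assert (0 < / r) by (apply Rinv_0_lt_compat; lra).
    assert (0 <= 2 / r * Rabs ((1 + r) * X * Fr - 1)) by (unfold Rdiv; apply Rmult_le_pos; [apply Rmult_le_pos|]; lra).
    assert (0 <= 9 * (r + 1) * X * (3 * q + 3 * m + 2 * Rabs Fr)).
    { apply Rmult_le_pos; [|lra]. apply Rmult_le_pos; lra. }
    lra. }
  exists (3 * Ce), (Rmin (r / 6) (1 / 18)).
  split; [lra|]. split.
  { apply Rmin_glb_lt; lra. }
  intros S [HS0 HSd].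
  assert (HSr : S < r / 6) by (eapply Rlt_le_trans; [exact HSd|apply Rmin_l]).
  assert (HS18 : S < 1 / 18) by (eapply Rlt_le_trans; [exact HSd|apply Rmin_r]).
  assert (H6 : 0 < sqrt 6) by (apply sqrt_lt_R0; lra).
  assert (H66 : sqrt 6 * sqrt 6 = 6) by (apply sqrt_sqrt; lra).
  assert (H63 : sqrt 6 < 3) by nra.
  set (e := sqrt 6 * S).
  assert (He : 0 < e) by (unfold e; nra).
  assert (He3 : e <= 3 * S) by (unfold e; nra).
  assert (Her : e <= r / 2) by lra.
  assert (He6 : e <= 1 / 6) by lra.
  set (A := Aparam S omega).
  assert (HA0 : 0 <= A) by (unfold A, Aparam; apply sqrt_pos).
  assert (HpA : 0 <= 1 + omega / (2 * S ^ 2)).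
  { assert (0 < omega / (2 * S ^ 2)) by (apply Rdiv_lt_0_compat; nra). lra. }
  assert (HA2 : A * A = 1 + omega / (2 * S ^ 2)) by (unfold A, Aparam; apply sqrt_sqrt; auto).
  set (s := e * (2 * A + 2)).
  set (d := s - r).
  assert (Hsq : (2 * e * A) ^ 2 = r ^ 2 + 4 * e ^ 2).
  { replace ((2 * e * A) ^ 2) with (4 * (sqrt 6 * sqrt 6) * S ^ 2 * (A * A)) by (unfold e; ring).
    replace (r ^ 2 + 4 * e ^ 2) with (4 * (sqrt (3 * omega) * sqrt (3 * omega)) + 4 * (sqrt 6 * sqrt 6) * S ^ 2)
      by (unfold r, e; ring).
    rewrite H66, HA2, H3o2. field. lra. }
  assert (Hw0 : 0 <= 2 * e * A) by nra.
  assert (Hd1 : 0 <= d - 2 * e).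
  { replace (d - 2 * e) with (2 * e * A - r) by (unfold d, s; ring). nra. }
  assert (Hd2 : d - 2 * e <= 2 * e ^ 2 / r).
  { replace (d - 2 * e) with (2 * e * A - r) by (unfold d, s; ring).
    set (w := 2 * e * A - r) in *.
    assert (w * (w + 2 * r) = 4 * e ^ 2) by (unfold w in *; nra).
    assert (w * r <= 2 * e ^ 2) by nra.
    apply Rmult_le_reg_r with r; auto. unfold Rdiv. rewrite Rmult_assoc, Rinv_l; lra. }
  assert (Hd0 : 0 <= d) by lra.
  assert (Hdh : d <= 1 / 2) by (assert (2 * e ^ 2 / r <= e) by (apply Rmult_le_reg_r with r; auto; unfold Rdiv; rewrite Rmult_assoc, Rinv_l; nra); lra).
  assert (Hsrd : s = r + d) by (unfold d; ring).
  assert (Hs : 0 < s) by lra.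
  set (c := s * exp s).
  assert (Hc : 0 < c) by (unfold c; apply Rmult_lt_0_compat; [lra|apply exp_pos]).
  assert (Hpt : forall n, Xi_term S omega n = c * g (s + INR n * e)).
  { intro n. unfold Xi_term, Defs.sigma. fold A. fold e.
    rewrite exp_pow_nat. unfold c, g.
    assert (Hne : 0 <= INR n) by apply pos_INR.
    assert (Hes : exp s <> 0) by (apply Rgt_not_eq, exp_pos).
    replace (exp (- (s + INR n * e))) with (/ exp s * exp (INR n * - e))
      by (rewrite <- exp_Ropp, <- exp_plus; f_equal; ring).
    replace (s + INR n * e) with (e * (INR n + 2 * A + 2)) by (unfold s; ring).
    unfold s in *. field. split; [|split]; auto; nra. }
  pose proof (infinite_sum_scal _ _ c (Xi S) Hc Hpt (HXi S HS0)) as Hser.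
  pose proof (series_lim s e (E1 s) (Xi S / c) Hs He (HE1 s Hs) Hser) as [HL1 HL2].
  set (L := e * (Xi S / c) - e * g s / 2 - E1 s) in *.
  set (Lt := s / e * exp s * L).
  assert (Hexps : exp s * exp (- s) = 1) by (rewrite <- exp_plus, Rplus_opp_r; apply exp_0).
  assert (HLt : Rabs Lt <= e * (1 + / r) / 2).
  { assert (0 < s / e * exp s) by (apply Rmult_lt_0_compat; [apply Rdiv_lt_0_compat|apply exp_pos]; lra).
    assert (Hup : s / e * exp s * (- e ^ 2 * h s / 2) = e * (1 + / s) / 2).
    { unfold h. rewrite exp_Ropp. field.
      split; [lra|]. split; [apply Rgt_not_eq, exp_pos|lra]. }
    assert (/ s <= / r) by (apply Rinv_le_contravar; lra).
    rewrite Rabs_right. 2:{ apply Rle_ge. unfold Lt. apply Rmult_le_pos; lra. }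
    unfold Lt. eapply Rle_trans. apply Rmult_le_compat_l; [lra|exact HL2]. rewrite Hup. nra. }
  assert (HXiS : Xi S = s / e * exp s * E1 s + / 2 + Lt).
  { unfold Lt, L, c, g. rewrite exp_Ropp. field.
    repeat split; try lra; apply Rgt_not_eq, exp_pos. }
  clearbody Lt.
  pose proof (E1_diff r s Fr (E1 s) Hr ltac:(lra) (HE1 r Hr) (HE1 s Hs)) as HJ.
  destruct (improper_RInt r Fr (HE1 r Hr)) as [Exr _].
  pose proof (J_bounds r d Hr Hd0 (Exr (r + d) ltac:(lra))) as [HJ1 HJ2].
  rewrite <- Hsrd in HJ1, HJ2.
  set (th1 := d * q - RInt g r s).
  assert (HE1s : E1 s = Fr - d * q + th1) by (unfold th1; lra).
  assert (Hth1 : 0 <= th1 <= m * d ^ 2 / 2) by (unfold th1, m; fold q in HJ1, HJ2; lra).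
  set (th2 := exp d - 1 - d).
  assert (Hexp : exp s = X * (1 + d + th2)) by (unfold th2, X; rewrite Hsrd, exp_plus; ring).
  assert (Hth2 : 0 <= th2 <= 2 * d ^ 2).
  { unfold th2. pose proof (exp_ineq1_le d). pose proof (exp_ineq1_le (- d)).
    assert (exp d * exp (- d) = 1) by (rewrite <- exp_plus, Rplus_opp_r; apply exp_0).
    assert (0 < exp d) by apply exp_pos.
    split; [lra|].
    assert (exp d * (1 - d) <= 1) by nra.
    assert ((1 - d) * (1 + d + 2 * d ^ 2) >= 1) by nra.
    nra. }
  assert (HT : xi_m1 E1 r * (sqrt 6 / S) + xi_0 E1 r
     = r * X * Fr / e + 2 * (1 + r) * X * Fr - 3 / 2).
  { unfold xi_m1, xi_0. fold X. fold Fr. unfold e.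
    replace (/ 6) with (/ (sqrt 6 * sqrt 6)) by (rewrite H66; reflexivity).
    field. lra. }
  rewrite HT, HXiS, Hexp, HE1s, Hsrd.
  pose proof (final_alg r e d X Fr q m th1 th2 Lt Hr He Her He6 HX Hq Hm (conj Hd1 Hd2) Hth1 Hth2 HLt) as Hf.
  fold Ce in Hf.
  replace ((r + d) / e * (X * (1 + d + th2)) * (Fr - d * q + th1))
    with ((r + d) / e * X * (1 + d + th2) * (Fr - d * q + th1)) by ring.
  eapply Rle_trans; [exact Hf|]. nra.
Qed.
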